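(* Let $f(\pi)=\pi f_1(0,\pi)+(1-\pi)f_0(0,\pi)$ and suppose $|f'(\pi)|\le L_{UN}$ for all $\pi\in[0,1]$ with some $L_{UN}<1$ (so the unconstrained policy reaches equality). Suppose $\pi_0(1|A)\ge\pi_0(1|B)$ and $g_Au(1)+(1-g_A)u(0)\le0$, and work in continuous time. Then: (i) $\max_{\pi\in[0,1]}|f_1(0,\pi)-f_0(0,\pi)|<1$, and the AA1 policy applied at all times reaches equality in continuous time; (ii) letting $\pi_t^{UN}(1|\cdot)$ and $\pi_t^{AA1}(1|\cdot)$ be the continuous-time trajectories from the same initial profiles under UN and under AA1 respectively, and $U_t(UN)$, $U_t(AA1)$ the institutional utilities of the respective policies evaluated on the respective profiles at time $t$, we have $U_t(UN)\ge U_t(AA1)$ for all $t\ge0$.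
   Context: Two groups $A,B$ with population fractions $g_A\in[0,1]$, $g_B=1-g_A$; $\neg j$ is the other group. Group $j$ has qualification profile $\pi_t(1|j)\in[0,1]$, $\pi_t(0|j)=1-\pi_t(1|j)$. A policy assigns $\tau(v;j)\in[0,1]$; utilities $u(0)\le0\le u(1)$; institutional utility $U_t(\tau)=\sum_jg_j\sum_vu(v)\tau(v;j)\pi_t(v|j)$. Selection rates $\beta_t(v;j)=\tau(v;j)\pi_t(v|j)$. Dynamics: continuously differentiable $f_0,f_1:[0,1]^2\to[0,1]$; continuous time $\frac{d}{dt}\pi_t(1|j)=\pi_t(1|j)(f_1(\beta_t(0;j),\beta_t(1;j))-1)+(1-\pi_t(1|j))f_0(\beta_t(0;j),\beta_t(1;j))$, policy determined by current profiles. UN: $\tau(1;j)=1,\tau(0;j)=0$, so each group follows $\dot\pi=f(\pi)-\pi$. Group $j$ is advantaged at $t$ if $\pi_t(1|j)\ge\pi_t(1|\neg j)$. AA1 w.r.t. advantaged $j$: $\tau(1;j)=\pi_t(1|\neg j)/\pi_t(1|j)$, $\tau(0;j)=0$, $\tau(1;\neg j)=1$, $\tau(0;\neg j)=0$ (selection rates $\beta_t(0;\cdot)=0$, $\beta_t(1;\cdot)=\pi_t(1|\neg j)$ for both groups); this is the utility-maximizing policy under the constraint of equal total selection rates when $g_ju(1)+(1-g_j)u(0)\le0$. Applied at all times w.r.t. the currently advantaged group. Reaching equality: $|\pi_t(1|A)-\pi_t(1|B)|\to0$ as $t\to\infty$. *)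

(* Defs.v *)
From Stdlib Require Import Reals Lra.
Open Scope R_scope.

Inductive grp := GA | GB.
Definition other (j : grp) : grp := match j with GA => GB | GB => GA end.

(* A qualification profile: [p j] = pi(1|j); pi(0|j) = 1 - pi(1|j). *)
Definition profile := grp -> R.
Definition pi (p : profile) (v : bool) (j : grp) : R :=
  if v then p j else 1 - p j.

(* A policy: [tau v j] = tau(v; j), v = true meaning qualified (v = 1). *)
Definition policy := bool -> grp -> R.

Definition gfrac (gA : R) (j : grp) : R := match j with GA => gA | GB => 1 - gA end.

Definition util (u0 u1 : R) (v : bool) : R := if v then u1 else u0.

Definition inst_util (gA u0 u1 : R) (tau : policy) (p : profile) : R :=
  gfrac gA GA * (util u0 u1 false * tau false GA * pi p false GA
                 + util u0 u1 true * tau true GA * pi p true GA)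
  + gfrac gA GB * (util u0 u1 false * tau false GB * pi p false GB
                   + util u0 u1 true * tau true GB * pi p true GB).

Definition sel (tau : policy) (p : profile) (v : bool) (j : grp) : R :=
  tau v j * pi p v j.

Definition dyn (f0 f1 : R -> R -> R) (tau : policy) (p : profile) (j : grp) : R :=
  p j * (f1 (sel tau p false j) (sel tau p true j) - 1)
  + (1 - p j) * f0 (sel tau p false j) (sel tau p true j).

Definition UN : policy := fun v _ => if v then 1 else 0.

(* Currently advantaged group (A on ties; at ties both AA1 policies induce
   the same selection rates, dynamics and utility). *)
Definition advantaged (p : profile) : grp :=
  if Rle_dec (p GB) (p GA) then GA else GB.

Definition grp_eqb (j k : grp) : bool :=
  match j, k with GA, GA | GB, GB => true | _, _ => false end.

Definition AA1_wrt (j : grp) (p : profile) : policy :=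
  fun v k => if v then (if grp_eqb k j then p (other j) / p j else 1) else 0.

Definition AA1 (p : profile) : policy := AA1_wrt (advantaged p) p.

Definition cont2 (g : R -> R -> R) : Prop :=
  forall x y eps, 0 < eps -> exists del, 0 < del /\
    forall x' y', Rabs (x' - x) < del -> Rabs (y' - y) < del ->
      Rabs (g x' y' - g x y) < eps.

Definition C1_2 (h : R -> R -> R) : Prop :=
  exists d1 d2 : R -> R -> R,
    (forall x y, derivable_pt_lim (fun s => h s y) x (d1 x y)) /\
    (forall x y, derivable_pt_lim (fun s => h x s) y (d2 x y)) /\
    cont2 d1 /\ cont2 d2.

Definition is_traj (f0 f1 : R -> R -> R) (P : profile -> policy)
    (x : R -> profile) : Prop :=
  (forall t j, 0 <= t -> 0 <= x t j <= 1) /\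
  (forall t j, 0 < t ->
     derivable_pt_lim (fun s => x s j) t (dyn f0 f1 (P (x t)) (x t) j)) /\
  (forall j eps, 0 < eps -> exists del, 0 < del /\
     forall t, 0 <= t < del -> Rabs (x t j - x 0 j) < eps).

Definition reaches_equality (x : R -> profile) : Prop :=
  forall eps, 0 < eps -> exists T, forall t, T <= t ->
    Rabs (x t GA - x t GB) < eps.

(* Main.v *)
Require Import Defs.
From Stdlib Require Import Reals Lra.
Open Scope R_scope.

Definition Pp (z : R) := Rmax 0 z * Rmax 0 z.

Lemma Pp_deriv z : derivable_pt_lim Pp z (2 * Rmax 0 z).
Proof.
  intros eps Heps. exists (mkposreal eps Heps). intros h Hh0 Hh. simpl in Hh.
  unfold Pp.
  assert (Hb : Rabs ((Rmax 0 (z + h) * Rmax 0 (z + h) - Rmax 0 z * Rmax 0 z) - 2 * Rmax 0 z * h) <= h * h).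
  { unfold Rmax; destruct (Rle_dec 0 (z+h)); destruct (Rle_dec 0 z);
    apply Rabs_le; split; nra. }
  assert (Ha : 0 < Rabs h) by (apply Rabs_pos_lt; auto).
  replace ((Rmax 0 (z + h) * Rmax 0 (z + h) - Rmax 0 z * Rmax 0 z) / h - 2 * Rmax 0 z)
    with (((Rmax 0 (z + h) * Rmax 0 (z + h) - Rmax 0 z * Rmax 0 z) - 2 * Rmax 0 z * h) / h)
    by (field; auto).
  unfold Rdiv; rewrite Rabs_mult, Rabs_inv.
  apply Rle_lt_trans with (h * h * / Rabs h).
  - apply Rmult_le_compat_r; [left; apply Rinv_0_lt_compat; auto | auto].
  - replace (h*h) with (Rabs h * Rabs h) by (rewrite <- Rabs_mult; apply Rabs_pos_eq; nra).
    field_simplify; lra.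
Qed.

Lemma deriv_left_max h q c : derivable_pt_lim h q c -> 0 < q ->
  (forall s, 0 <= s <= q -> h s <= h q) -> 0 <= c.
Proof.
  intros Hd Hq Hm. destruct (Rle_lt_dec 0 c) as [|Hc]; auto. exfalso.
  destruct (Hd (-c/2)) as [d Hd']; [lra|].
  set (e := - Rmin (d/2) q).
  assert (Hd0 := cond_pos d).
  assert (He : 0 < Rmin (d/2) q) by (apply Rmin_glb_lt; lra).
  assert (Hle : Rmin (d/2) q <= q) by apply Rmin_r.
  assert (Hle2 : Rmin (d/2) q <= d/2) by apply Rmin_l.
  specialize (Hd' e). assert (e <> 0) by (unfold e; lra).
  assert (Rabs e < d) by (unfold e; rewrite Rabs_Ropp, Rabs_pos_eq; lra).
  specialize (Hd' H H0).
  assert (Hq2 : (h (q + e) - h q) / e >= 0).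
  { unfold Rdiv. assert (h (q+e) - h q <= 0) by (apply Rle_minus, Hm; unfold e; lra).
    assert (/ e < 0) by (apply Rinv_lt_0_compat; unfold e; lra). nra. }
  apply Rabs_def2 in Hd'. lra.
Qed.

Lemma deriv_right_min h q c : derivable_pt_lim h q c -> q < 1 ->
  (forall s, q <= s <= 1 -> h q <= h s) -> 0 <= c.
Proof.
  intros Hd Hq Hm. destruct (Rle_lt_dec 0 c) as [|Hc]; auto. exfalso.
  destruct (Hd (-c/2)) as [d Hd']; [lra|].
  set (e := Rmin (d/2) (1-q)).
  assert (Hd0 := cond_pos d).
  assert (He : 0 < e) by (apply Rmin_glb_lt; lra).
  assert (Hle : e <= 1-q) by apply Rmin_r.
  assert (Hle2 : e <= d/2) by apply Rmin_l.
  specialize (Hd' e). assert (e <> 0) by lra.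
  assert (Rabs e < d) by (rewrite Rabs_pos_eq; lra).
  specialize (Hd' H H0).
  assert (Hq2 : (h (q + e) - h q) / e >= 0).
  { unfold Rdiv. assert (h (q+e) - h q >= 0) by (apply Rge_minus, Rle_ge, Hm; lra).
    assert (/ e > 0) by (apply Rinv_0_lt_compat; lra). nra. }
  apply Rabs_def2 in Hd'. lra.
Qed.

Lemma noninc f f' : (forall t, 0 < t -> derivable_pt_lim f t (f' t)) ->
  (forall t, 0 < t -> f' t <= 0) -> forall s t, 0 < s <= t -> f t <= f s.
Proof.
  intros Hd Hn s t [Hs Hst]. destruct Hst as [Hlt|Heq]; [|subst; lra].
  destruct (MVT_cor2 f f' s t Hlt) as [c [Hc1 Hc2]].
  - intros c Hc; apply Hd; lra.
  - assert (f' c <= 0) by (apply Hn; lra). nra.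
Qed.


Lemma f_deriv (f0 f1 : R -> R -> R) e0 e1 q :
  derivable_pt_lim (fun s => f1 0 s) q e1 -> derivable_pt_lim (fun s => f0 0 s) q e0 ->
  derivable_pt_lim (fun s => s * f1 0 s + (1 - s) * f0 0 s) q
    (f1 0 q + q*e1 - f0 0 q + (1-q)*e0).
Proof.
  intros H1 H0.
  assert (Hid := derivable_pt_lim_id q).
  assert (Hc := derivable_pt_lim_const 1 q).
  assert (Hm := derivable_pt_lim_minus _ _ _ _ _ Hc Hid).
  assert (A := derivable_pt_lim_mult _ _ _ _ _ Hid H1).
  assert (B := derivable_pt_lim_mult _ _ _ _ _ Hm H0).
  assert (C := derivable_pt_lim_plus _ _ _ _ _ A B).
  unfold plus_fct, mult_fct, minus_fct, fct_cte, id in C.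
  replace (f1 0 q + q * e1 - f0 0 q + (1 - q) * e0) with
    (1 * f1 0 q + q * e1 + ((0 - 1) * f0 0 q + (1 - q) * e0)) by ring.
  exact C.
Qed.

Lemma Fmono (f0 f1 : R -> R -> R) fd L :
  (forall q, 0 <= q <= 1 -> derivable_pt_lim (fun s => s * f1 0 s + (1 - s) * f0 0 s) q (fd q)
     /\ Rabs (fd q) <= L) -> L < 1 ->
  forall y m, 0 <= y <= m -> m <= 1 ->
  m * (f1 0 m - 1) + (1 - m) * f0 0 m <= y * (f1 0 y - 1) + (1 - y) * f0 0 y.
Proof.
  intros Hd HL y m [Hy Hym] Hm. destruct Hym as [Hlt|Heq]; [|subst; lra].
  destruct (MVT_cor2 (fun s => s * f1 0 s + (1 - s) * f0 0 s) fd y m Hlt) as [c [Hc1 Hc2]].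
  - intros c Hc; apply Hd; lra.
  - assert (Hc : Rabs (fd c) <= L) by (apply Hd; lra).
    assert (fd c <= L) by (pose proof (Rle_abs (fd c)); lra).
    cbv beta in Hc1. nra.
Qed.

Lemma sel_AA1_false p j : sel (AA1 p) p false j = 0.
Proof. unfold sel, AA1, AA1_wrt; ring. Qed.

Lemma sel_AA1_true p j : (forall k, 0 <= p k) -> sel (AA1 p) p true j = Rmin (p GA) (p GB).
Proof.
  intros Hp. unfold sel, AA1, AA1_wrt, advantaged, pi.
  destruct (Rle_dec (p GB) (p GA)) as [H|H]; destruct j; simpl.
  - destruct (Req_dec (p GA) 0) as [E|E].
    + assert (p GB = 0) by (specialize (Hp GB); lra). rewrite E, H0, Rmin_left by lra. ring.
    + rewrite Rmin_right by lra. field; auto.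
  - rewrite Rmin_right by lra; ring.
  - rewrite Rmin_left by lra; ring.
  - assert (p GB <> 0) by (specialize (Hp GA); lra).
    rewrite Rmin_left by lra. field; auto.
Qed.

Lemma dyn_AA1 f0 f1 p j : (forall k, 0 <= p k) ->
  dyn f0 f1 (AA1 p) p j = p j * (f1 0 (Rmin (p GA) (p GB)) - 1)
     + (1 - p j) * f0 0 (Rmin (p GA) (p GB)).
Proof.
  intros Hp. unfold dyn. rewrite sel_AA1_false, sel_AA1_true by auto. reflexivity.
Qed.

Lemma dyn_UN f0 f1 p j : dyn f0 f1 UN p j = p j * (f1 0 (p j) - 1) + (1 - p j) * f0 0 (p j).
Proof.
  unfold dyn, sel, UN, pi. replace (0 * (1 - p j)) with 0 by ring.
  replace (1 * p j) with (p j) by ring. reflexivity.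
Qed.

Lemma util_AA1 gA u0 u1 p : (forall k, 0 <= p k) ->
  inst_util gA u0 u1 (AA1 p) p = u1 * Rmin (p GA) (p GB).
Proof.
  intros Hp. unfold inst_util.
  assert (E : forall j, AA1 p true j * pi p true j = Rmin (p GA) (p GB))
    by (intro j; rewrite <- (sel_AA1_true p j Hp); reflexivity).
  unfold util. rewrite !Rmult_assoc, !E.
  unfold AA1, AA1_wrt, gfrac. ring.
Qed.

Lemma util_UN gA u0 u1 p :
  inst_util gA u0 u1 UN p = gA * (u1 * p GA) + (1 - gA) * (u1 * p GB).
Proof. unfold inst_util, UN, util, gfrac, pi; ring. Qed.


Lemma part_ia (f0 f1 : R -> R -> R) (c0 c1 : R -> R) (L : R)
  (Hf0r : forall b0 b1, 0 <= b0 <= 1 -> 0 <= b1 <= 1 -> 0 <= f0 b0 b1 <= 1)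
  (Hf1r : forall b0 b1, 0 <= b0 <= 1 -> 0 <= b1 <= 1 -> 0 <= f1 b0 b1 <= 1)
  (Hc0 : forall q, derivable_pt_lim (fun s => f0 0 s) q (c0 q))
  (Hc1 : forall q, derivable_pt_lim (fun s => f1 0 s) q (c1 q))
  (HL : L < 1)
  (Hfd : forall q, 0 <= q <= 1 ->
     Rabs (f1 0 q + q * c1 q - f0 0 q + (1-q) * c0 q) <= L) :
  exists qm, 0 <= qm <= 1 /\
      (forall q, 0 <= q <= 1 -> Rabs (f1 0 q - f0 0 q) <= Rabs (f1 0 qm - f0 0 qm)) /\
      Rabs (f1 0 qm - f0 0 qm) < 1.
Proof.
  destruct (continuity_ab_maj (fun q => Rabs (f1 0 q - f0 0 q)) 0 1) as [qm [Hm Hqm]].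
  - lra.
  - intros c _.
    apply (continuity_pt_comp (fun q => f1 0 q - f0 0 q) Rabs).
    + apply (continuity_pt_minus (fun q => f1 0 q) (fun q => f0 0 q)).
      * apply derivable_continuous_pt. exists (c1 c). apply Hc1.
      * apply derivable_continuous_pt. exists (c0 c). apply Hc0.
    + apply Rcontinuity_abs.
  - exists qm. split; [auto|]. split; [intros; apply Hm; auto|].
    assert (R01 : 0 <= 0 <= 1) by lra.
    destruct (Hf0r 0 qm R01 Hqm) as [A0 B0].
    destruct (Hf1r 0 qm R01 Hqm) as [A1 B1].
    assert (HF := Hfd qm Hqm).
    assert (Hle : forall s, 0 <= s <= 1 -> 0 <= f0 0 s <= 1 /\ 0 <= f1 0 s <= 1)
      by (intros; split; auto).
    destruct (Rlt_le_dec (Rabs (f1 0 qm - f0 0 qm)) 1) as [|Hge]; auto. exfalso.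
    destruct (Rcase_abs (f1 0 qm - f0 0 qm)) as [Hn|Hp].
    + rewrite Rabs_left in Hge by auto.
      assert (E1 : f1 0 qm = 0) by lra. assert (E0 : f0 0 qm = 1) by lra.
      assert (X1 : qm * c1 qm <= 0).
      { destruct (Req_dec qm 0) as [Z|Z]; [rewrite Z; lra|].
        assert (0 <= - c1 qm).
        { apply (deriv_left_max (- (fun s => f1 0 s))%F qm).
          - apply derivable_pt_lim_opp; auto.
          - lra.
          - intros s Hs. unfold opp_fct. rewrite E1.
            destruct (Hle s ltac:(lra)). lra. }
        nra. }
      assert (X0 : (1 - qm) * c0 qm <= 0).
      { destruct (Req_dec qm 1) as [Z|Z]; [rewrite Z; lra|].
        assert (0 <= - c0 qm).
        { apply (deriv_right_min (- (fun s => f0 0 s))%F qm).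
          - apply derivable_pt_lim_opp; auto.
          - lra.
          - intros s Hs. unfold opp_fct. rewrite E0.
            destruct (Hle s ltac:(lra)). lra. }
        nra. }
      rewrite E1, E0 in HF. rewrite Rabs_left in HF by lra. lra.
    + rewrite Rabs_right in Hge by auto.
      assert (E1 : f1 0 qm = 1) by lra. assert (E0 : f0 0 qm = 0) by lra.
      assert (X1 : 0 <= qm * c1 qm).
      { destruct (Req_dec qm 0) as [Z|Z]; [rewrite Z; lra|].
        assert (0 <= c1 qm).
        { apply (deriv_left_max (fun s => f1 0 s) qm).
          - auto.
          - lra.
          - intros s Hs. rewrite E1.
            destruct (Hle s ltac:(lra)). lra. }
        nra. }
      assert (X0 : 0 <= (1 - qm) * c0 qm).
      { destruct (Req_dec qm 1) as [Z|Z]; [rewrite Z; lra|].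
        assert (0 <= c0 qm).
        { apply (deriv_right_min (fun s => f0 0 s) qm).
          - auto.
          - lra.
          - intros s Hs. rewrite E0.
            destruct (Hle s ltac:(lra)). lra. }
        nra. }
      rewrite E1, E0 in HF. rewrite Rabs_right in HF by lra. lra.
Qed.


Lemma part_ib (f0 f1 : R -> R -> R) K (HK : K < 1)
  (Hmax : forall q, 0 <= q <= 1 -> f1 0 q - f0 0 q <= K)
  (x : R -> profile) (Htraj : is_traj f0 f1 AA1 x) : reaches_equality x.
Proof.
  destruct Htraj as [Hr [Hd _]].
  set (c := 1 - K).
  set (D := fun t => x t GA - x t GB).
  set (dD := fun t => dyn f0 f1 (AA1 (x t)) (x t) GA - dyn f0 f1 (AA1 (x t)) (x t) GB).
  set (E := fun t => D t * D t * exp (2 * c * t)).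
  set (E' := fun t => (dD t * D t + D t * dD t) * exp (2 * c * t)
                     + D t * D t * (exp (2 * c * t) * (2 * c * 1))).
  assert (HE : forall t, 0 < t -> derivable_pt_lim E t (E' t)).
  { intros t Ht.
    assert (A := derivable_pt_lim_minus _ _ _ _ _ (Hd t GA Ht) (Hd t GB Ht)).
    assert (B := derivable_pt_lim_mult _ _ _ _ _ A A).
    assert (C0 := derivable_pt_lim_scal _ (2*c) _ _ (derivable_pt_lim_id t)).
    assert (C := derivable_pt_lim_comp _ _ _ _ _ C0 (derivable_pt_lim_exp (mult_real_fct (2 * c) id t))).
    assert (F := derivable_pt_lim_mult _ _ _ _ _ B C).
    unfold mult_fct, minus_fct, comp, mult_real_fct, id in F.
    exact F. }
  assert (HE' : forall t, 0 < t -> E' t <= 0).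
  { intros t Ht. unfold E', dD, D.
    assert (Hn : forall k, 0 <= x t k) by (intro k; apply Hr; lra).
    rewrite !dyn_AA1 by auto.
    set (m := Rmin (x t GA) (x t GB)).
    assert (Hm01 : 0 <= m <= 1).
    { unfold m; split.
      - apply Rmin_glb; apply Hr; lra.
      - apply Rle_trans with (x t GA); [apply Rmin_l| apply Hr; lra]. }
    assert (Hk := Hmax m Hm01).
    assert (He := exp_pos (2 * c * t)).
    set (d := x t GA - x t GB).
    fold d.
    assert (HP : 0 <= d * d * exp (2 * c * t))
      by (apply Rmult_le_pos; [apply Rle_0_sqr | lra]).
    match goal with |- ?L <= 0 => replace L with (2 * (d * d * exp (2 * c * t)) * (f1 0 m - f0 0 m - K)) by (unfold c, d; ring) end.
    assert (f1 0 m - f0 0 m - K <= 0) by lra.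
    nra. }
  assert (Hmono := noninc E E' HE HE').
  intros eps Heps.
  assert (Hc : 0 < c) by (unfold c; lra).
  exists (1 + / (eps * eps * (2 * c))).
  intros t Ht.
  assert (Hpos : 0 < / (eps * eps * (2 * c))) by (apply Rinv_0_lt_compat; apply Rmult_lt_0_compat; [apply Rmult_lt_0_compat|]; lra).
  assert (H1 : E t <= E 1) by (apply Hmono; lra).
  assert (HD1 : D 1 * D 1 <= 1).
  { unfold D. assert (A := Hr 1 GA ltac:(lra)). assert (B := Hr 1 GB ltac:(lra)). nra. }
  assert (HE1 : E 1 <= exp (2 * c)).
  { unfold E. replace (2 * c * 1) with (2 * c) by ring.
    assert (A := exp_pos (2 * c)). nra. }
  set (z := 2 * c * (t - 1)).
  assert (Hz : / (eps * eps) <= z).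
  { unfold z. replace (/ (eps * eps)) with (2 * c * / (eps * eps * (2 * c))) by (field; lra).
    apply Rmult_le_compat_l; lra. }
  assert (Hz0 : 0 < z) by (assert (0 < / (eps*eps)) by (apply Rinv_0_lt_compat; nra); lra).
  assert (Hexp : 1 + z < exp z) by (apply exp_ineq1; lra).
  assert (Hsplit : exp (2 * c * t) = exp (2 * c) * exp z)
    by (rewrite <- exp_plus; unfold z; f_equal; ring).
  assert (Hdz : D t * D t * exp z <= 1).
  { assert (H2 : E t <= exp (2 * c)) by lra.
    unfold E in H2. rewrite Hsplit in H2. assert (A := exp_pos (2 * c)).
    assert (exp (2*c) * (D t * D t * exp z) <= exp (2 * c) * 1).
    { replace (exp (2*c) * (D t * D t * exp z)) with (D t * D t * (exp (2 * c) * exp z)) by ring. lra. }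
    apply Rmult_le_reg_l in H; lra. }
  destruct (Rlt_le_dec (Rabs (x t GA - x t GB)) eps) as [|Hge]; auto. exfalso.
  assert (Hsq : eps * eps <= D t * D t).
  { unfold D. destruct (Rcase_abs (x t GA - x t GB)) as [Hn|Hn];
    [rewrite Rabs_left in Hge by auto | rewrite Rabs_right in Hge by auto]; nra. }
  assert (Hi : eps * eps * / (eps * eps) = 1) by (field; lra).
  assert (0 < eps * eps) by nra.
  assert (eps * eps * z >= 1) by nra.
  assert (eps * eps * exp z > 1) by nra.
  assert (0 < exp z) by apply exp_pos.
  nra.
Qed.


Lemma Pp_nonneg z : 0 <= Pp z.
Proof. unfold Pp, Rmax; destruct (Rle_dec 0 z); nra. Qed.
Lemma Pp_le_sq z : Pp z <= z * z.
Proof. unfold Pp, Rmax; destruct (Rle_dec 0 z); nra. Qed.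
Lemma Pp_le1 z : -1 <= z <= 1 -> Pp z <= 1.
Proof. unfold Pp, Rmax; destruct (Rle_dec 0 z); nra. Qed.
Lemma Pp_zero z : Pp z = 0 -> z <= 0.
Proof. unfold Pp, Rmax; destruct (Rle_dec 0 z); nra. Qed.
Lemma Rmax0_neg z : z <= 0 -> Rmax 0 z = 0.
Proof. intros; unfold Rmax; destruct (Rle_dec 0 z); lra. Qed.
Lemma Rmax0_pos z : 0 < z -> Rmax 0 z = z.
Proof. intros; unfold Rmax; destruct (Rle_dec 0 z); lra. Qed.

Lemma part_ii (f0 f1 : R -> R -> R)
  (Hf0r : forall b0 b1, 0 <= b0 <= 1 -> 0 <= b1 <= 1 -> 0 <= f0 b0 b1 <= 1)
  (Hf1r : forall b0 b1, 0 <= b0 <= 1 -> 0 <= b1 <= 1 -> 0 <= f1 b0 b1 <= 1)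
  (Fm : forall y m, 0 <= y <= m -> m <= 1 ->
     m * (f1 0 m - 1) + (1 - m) * f0 0 m <= y * (f1 0 y - 1) + (1 - y) * f0 0 y)
  (xUN xAA : R -> profile)
  (tUN : is_traj f0 f1 (fun _ => UN) xUN) (tAA : is_traj f0 f1 AA1 xAA)
  (H0 : xUN 0 = xAA 0) (j : grp) :
  forall t, 0 <= t -> Rmin (xAA t GA) (xAA t GB) <= xUN t j.
Proof.
  destruct tUN as [RU [DU CU]]. destruct tAA as [RA [DA CA]].
  assert (Glem : forall x m y, 0 <= y -> y <= m -> m <= x -> x <= 1 ->
    x * (f1 0 m - 1) + (1 - x) * f0 0 m <= y * (f1 0 y - 1) + (1 - y) * f0 0 y).
  { intros x m y Hy Hym Hmx Hx.
    assert (R01 : 0 <= 0 <= 1) by lra.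
    destruct (Hf0r 0 m R01 ltac:(lra)). destruct (Hf1r 0 m R01 ltac:(lra)).
    assert (Fm' := Fm y m ltac:(lra) ltac:(lra)). nra. }
  set (a := fun t => xAA t GA - xUN t j).
  set (b := fun t => xAA t GB - xUN t j).
  set (dU := fun t => dyn f0 f1 UN (xUN t) j).
  set (dA := fun t => dyn f0 f1 (AA1 (xAA t)) (xAA t) GA).
  set (dB := fun t => dyn f0 f1 (AA1 (xAA t)) (xAA t) GB).
  set (psi := fun t => Pp (a t) * Pp (b t)).
  set (psi' := fun t => (2 * Rmax 0 (a t) * (dA t - dU t)) * Pp (b t)
                        + Pp (a t) * (2 * Rmax 0 (b t) * (dB t - dU t))).
  assert (Hd : forall t, 0 < t -> derivable_pt_lim psi t (psi' t)).
  { intros t Ht.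
    assert (A := derivable_pt_lim_comp _ _ _ _ _
       (derivable_pt_lim_minus _ _ _ _ _ (DA t GA Ht) (DU t j Ht)) (Pp_deriv _)).
    assert (B := derivable_pt_lim_comp _ _ _ _ _
       (derivable_pt_lim_minus _ _ _ _ _ (DA t GB Ht) (DU t j Ht)) (Pp_deriv _)).
    assert (C := derivable_pt_lim_mult _ _ _ _ _ A B).
    unfold comp, minus_fct, mult_fct in C. exact C. }
  assert (Hs : forall t, 0 < t -> psi' t <= 0).
  { intros t Ht. unfold psi'.
    assert (Ha0 := Pp_nonneg (a t)). assert (Hb0 := Pp_nonneg (b t)).
    destruct (Rle_lt_dec (a t) 0) as [Ha|Ha].
    { rewrite Rmax0_neg by auto. assert (Pp (a t) = 0) by (unfold Pp; rewrite Rmax0_neg by auto; ring).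
      rewrite H. lra. }
    destruct (Rle_lt_dec (b t) 0) as [Hb|Hb].
    { rewrite (Rmax0_neg (b t)) by auto. assert (Pp (b t) = 0) by (unfold Pp; rewrite Rmax0_neg by auto; ring).
      rewrite H. lra. }
    rewrite !Rmax0_pos by auto.
    assert (Hn : forall k, 0 <= xAA t k) by (intro k; apply RA; lra).
    assert (HA := RA t GA ltac:(lra)). assert (HB := RA t GB ltac:(lra)).
    assert (HU := RU t j ltac:(lra)).
    unfold a, b in Ha, Hb.
    assert (Hm : xUN t j <= Rmin (xAA t GA) (xAA t GB)) by (apply Rmin_glb; lra).
    assert (E1 : dA t - dU t <= 0).
    { unfold dA, dU. rewrite dyn_AA1, dyn_UN by auto.
      pose proof (Glem (xAA t GA) (Rmin (xAA t GA) (xAA t GB)) (xUN t j) ltac:(lra) Hm (Rmin_l _ _) ltac:(lra)).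
      lra. }
    assert (E2 : dB t - dU t <= 0).
    { unfold dB, dU. rewrite dyn_AA1, dyn_UN by auto.
      pose proof (Glem (xAA t GB) (Rmin (xAA t GA) (xAA t GB)) (xUN t j) ltac:(lra) Hm (Rmin_r _ _) ltac:(lra)).
      lra. }
    fold (a t) (b t). unfold a, b.
    assert (X1 : 0 <= 2 * (xAA t GA - xUN t j) * Pp (b t)) by (apply Rmult_le_pos; lra).
    assert (X2 : 0 <= Pp (a t) * (2 * (xAA t GB - xUN t j))) by (apply Rmult_le_pos; lra).
    unfold a, b in X1, X2. nra. }
  assert (Hmono := noninc psi psi' Hd Hs).
  intros t Ht.
  destruct Ht as [Ht|Ht]; [|subst t; rewrite <- H0; destruct j; simpl; [apply Rmin_l|apply Rmin_r]].
  assert (Hpsi0 : psi t = 0).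
  { assert (P0 : 0 <= psi t) by (unfold psi; apply Rmult_le_pos; apply Pp_nonneg).
    destruct P0 as [P0|P0]; [exfalso|auto].
    set (eta := Rmin 1 (psi t) / 4).
    assert (Heta : 0 < eta) by (assert (0 < Rmin 1 (psi t)) by (apply Rmin_glb_lt; lra); unfold eta; lra).
    assert (Heta2 : (2 * eta) * (2 * eta) < psi t).
    { unfold eta. assert (M1 := Rmin_l 1 (psi t)). assert (M2 := Rmin_r 1 (psi t)).
      assert (0 < Rmin 1 (psi t)) by (apply Rmin_glb_lt; lra). nra. }
    destruct (CA j eta Heta) as [d1 [Hd1 C1]].
    destruct (CU j eta Heta) as [d2 [Hd2 C2]].
    set (s := Rmin (Rmin d1 d2) t / 2).
    assert (Hs0 : 0 < Rmin (Rmin d1 d2) t) by (repeat apply Rmin_glb_lt; lra).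
    assert (S1 := Rmin_l (Rmin d1 d2) t). assert (S2 := Rmin_r (Rmin d1 d2) t).
    assert (S3 := Rmin_l d1 d2). assert (S4 := Rmin_r d1 d2).
    assert (Hle : psi t <= psi s) by (apply Hmono; unfold s; lra).
    specialize (C1 s ltac:(unfold s; lra)). specialize (C2 s ltac:(unfold s; lra)).
    rewrite H0 in C2.
    apply Rabs_def2 in C1. apply Rabs_def2 in C2.
    assert (Hc : Pp (xAA s j - xUN s j) < (2 * eta) * (2 * eta)).
    { apply Rle_lt_trans with ((xAA s j - xUN s j) * (xAA s j - xUN s j)); [apply Pp_le_sq|].
      nra. }
    assert (Hps : psi s <= Pp (xAA s j - xUN s j)).
    { assert (HA := RA s GA ltac:(unfold s; lra)). assert (HB := RA s GB ltac:(unfold s; lra)).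
      assert (HU := RU s j ltac:(unfold s; lra)).
      unfold psi, a, b. destruct j.
      - assert (Pp (xAA s GB - xUN s GA) <= 1) by (apply Pp_le1; lra).
        assert (X := Pp_nonneg (xAA s GA - xUN s GA)). nra.
      - assert (Pp (xAA s GA - xUN s GB) <= 1) by (apply Pp_le1; lra).
        assert (X := Pp_nonneg (xAA s GB - xUN s GB)). nra. }
    lra. }
  unfold psi in Hpsi0. apply Rmult_integral in Hpsi0.
  destruct Hpsi0 as [Z|Z]; apply Pp_zero in Z; unfold a, b in Z.
  - apply Rle_trans with (xAA t GA); [apply Rmin_l|lra].
  - apply Rle_trans with (xAA t GB); [apply Rmin_r|lra].
Qed.

Theorem mainTheorem10
  (f0 f1 : R -> R -> R)
  (Hf0 : C1_2 f0) (Hf1 : C1_2 f1)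
  (Hf0r : forall b0 b1, 0 <= b0 <= 1 -> 0 <= b1 <= 1 -> 0 <= f0 b0 b1 <= 1)
  (Hf1r : forall b0 b1, 0 <= b0 <= 1 -> 0 <= b1 <= 1 -> 0 <= f1 b0 b1 <= 1)
  (LUN : R) (HLUN : LUN < 1)
  (Hfder : forall q, 0 <= q <= 1 ->
     exists l, derivable_pt_lim (fun s => s * f1 0 s + (1 - s) * f0 0 s) q l
               /\ Rabs l <= LUN)
  (gA u0 u1 : R) (HgA : 0 <= gA <= 1) (Hu0 : u0 <= 0) (Hu1 : 0 <= u1)
  (Hu : gA * u1 + (1 - gA) * u0 <= 0)
  (p0 : profile) (Hp0 : forall j, 0 <= p0 j <= 1) (Hadv : p0 GB <= p0 GA) :
  ((exists qm, 0 <= qm <= 1 /\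
      (forall q, 0 <= q <= 1 -> Rabs (f1 0 q - f0 0 q) <= Rabs (f1 0 qm - f0 0 qm)) /\
      Rabs (f1 0 qm - f0 0 qm) < 1) /\
   (forall xAA : R -> profile,
      is_traj f0 f1 AA1 xAA -> xAA 0 = p0 -> reaches_equality xAA)) /\
  (forall xUN xAA : R -> profile,
     is_traj f0 f1 (fun _ => UN) xUN -> xUN 0 = p0 ->
     is_traj f0 f1 AA1 xAA -> xAA 0 = p0 ->
     forall t, 0 <= t -> inst_util gA u0 u1 UN (xUN t) >= inst_util gA u0 u1 (AA1 (xAA t)) (xAA t)).
Proof.
  destruct Hf0 as [a1 [a2 [_ [Ha2 _]]]]. destruct Hf1 as [b1 [b2 [_ [Hb2 _]]]].
  set (fd := fun q => f1 0 q + q * b2 0 q - f0 0 q + (1 - q) * a2 0 q).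
  assert (Hfd : forall q, 0 <= q <= 1 ->
    derivable_pt_lim (fun s => s * f1 0 s + (1 - s) * f0 0 s) q (fd q) /\ Rabs (fd q) <= LUN).
  { intros q Hq. destruct (Hfder q Hq) as [l [Hl Hb]].
    assert (Hd := f_deriv f0 f1 (a2 0 q) (b2 0 q) q (Hb2 0 q) (Ha2 0 q)).
    split; [exact Hd|]. unfold fd. rewrite (uniqueness_limite _ _ _ _ Hd Hl). auto. }
  assert (Hmax : exists qm, 0 <= qm <= 1 /\
      (forall q, 0 <= q <= 1 -> Rabs (f1 0 q - f0 0 q) <= Rabs (f1 0 qm - f0 0 qm)) /\
      Rabs (f1 0 qm - f0 0 qm) < 1).
  { apply (part_ia f0 f1 (fun q => a2 0 q) (fun q => b2 0 q) LUN Hf0r Hf1r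
             (fun q => Ha2 0 q) (fun q => Hb2 0 q) HLUN).
    intros q Hq. apply (Hfd q Hq). }
  split; [split; [exact Hmax|]|].
  - intros xAA HAA _. destruct Hmax as [qm [Hqm [Hm Hlt]]].
    apply (part_ib f0 f1 (Rabs (f1 0 qm - f0 0 qm)) Hlt); auto.
    intros q Hq. apply Rle_trans with (Rabs (f1 0 q - f0 0 q)); [apply Rle_abs|auto].
  - intros xUN xAA HUN HU0 HAA HA0 t Ht.
    assert (Fm := Fmono f0 f1 fd LUN Hfd HLUN).
    assert (E : xUN 0 = xAA 0) by congruence.
    assert (MA := part_ii f0 f1 Hf0r Hf1r Fm xUN xAA HUN HAA E GA t Ht).
    assert (MB := part_ii f0 f1 Hf0r Hf1r Fm xUN xAA HUN HAA E GB t Ht).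
    rewrite util_UN, util_AA1.
    2:{ intro k. destruct HAA as [R _]. apply R; auto. }
    apply Rle_ge.
    set (m := Rmin (xAA t GA) (xAA t GB)) in *.
    assert (0 <= u1 * (xUN t GA - m)) by (apply Rmult_le_pos; lra).
    assert (0 <= u1 * (xUN t GB - m)) by (apply Rmult_le_pos; lra).
    nra.
Qed.
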